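(* Let $X$ be a real Banach space and $f:X\to\mathbb{R}\cup\{+\infty\}$ proper, convex and lsc. Let $x\in\mathrm{int}(\mathrm{dom}\, f)$, let $v^*\in X^*$ be a point at which $f^*$ is Fréchet differentiable, and set $\widehat{a}=Df^*(v^* )$. Assume $F_{\partial f}(x,v^* )=f(x)+f^*(v^* )$. Then (i) $\mathcal{M}_{\partial f}(x,v^* )\neq\varnothing$; (ii) for every $(a,a^* )\in\mathcal{M}_{\partial f}(x,v^* )$ one has $a=\widehat{a}$ and $a^*\in\partial f(x)\cap\partial f(\widehat{a})$.
   Context: $f^*$ is the Fenchel conjugate; at a Fréchet differentiability point $v^*$ of $f^*$ the derivative $Df^*(v^* )$ belongs to $X$. $F_{\partial f}(x,x^* )=\sup_{(y,y^* )\in\mathrm{Gr}(\partial f)}\{\langle y,x^*\rangle+\langle x,y^*\rangle-\langle y,y^*\rangle\}$ and $\mathcal{M}_{\partial f}(x,x^* )=\{(a,a^* )\in\mathrm{Gr}(\partial f): F_{\partial f}(x,x^* )=\langle x,a^*\rangle+\langle a,x^*\rangle-\langle a,a^*\rangle\}$. *)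

(* Defs.v *)
From HB Require Import structures.
From mathcomp Require Import all_boot all_order all_algebra.
From mathcomp Require Import all_classical all_reals.
From mathcomp Require Import ereal topology normedtype.
Set Implicit Arguments. Unset Strict Implicit. Unset Printing Implicit Defensive.
Import Order.TTheory GRing.Theory Num.Theory.
Import numFieldNormedType.Exports.
Local Open Scope classical_set_scope.
Local Open Scope ring_scope.

Section Defs.
Context {R : realType} {X : normedModType R}.

Definition is_dual (phi : X -> R) : Prop :=
  (forall (a : R) (x y : X), phi (a *: x + y) = a * phi x + phi y)
  /\ continuous phi.

Definition dnorm (phi : X -> R) : R :=
  sup [set `|phi x| | x in [set x : X | `|x| <= 1]].

Definition proper_fun (f : X -> \bar R) : Prop :=
  (forall x, f x != -oo%E) /\ (exists x, f x \is a fin_num).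

Definition convex_fun (f : X -> \bar R) : Prop :=
  forall (x y : X) (t : R), 0 < t < 1 ->
    (f (t *: x + (1 - t) *: y)%R <= t%:E * f x + (1 - t)%:E * f y)%E.

Definition lsc_fun (f : X -> \bar R) : Prop :=
  forall c : R, closed [set x | (f x <= c%:E)%E].

Definition dom (f : X -> \bar R) : set X := [set x | (f x < +oo)%E].

Definition fconj (f : X -> \bar R) (phi : X -> R) : \bar R :=
  ereal_sup [set ((phi y)%:E - f y)%E | y in [set: X]].

Definition subdiff (f : X -> \bar R) (x : X) : set (X -> R) :=
  [set phi | is_dual phi /\ f x \is a fin_num /\
     forall y, (f x + (phi (y - x)%R)%:E <= f y)%E].

Definition graph_subdiff (f : X -> \bar R) : set (X * (X -> R)) :=
  [set p | subdiff f p.1 p.2].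

Definition fitzpatrick (f : X -> \bar R) (x : X) (xs : X -> R) : \bar R :=
  ereal_sup [set (xs p.1 + p.2 x - p.2 p.1)%:E | p in graph_subdiff f].

Definition Mset (f : X -> \bar R) (x : X) (xs : X -> R) : set (X * (X -> R)) :=
  [set p | graph_subdiff f p /\
     fitzpatrick f x xs = (p.2 x + xs p.1 - p.2 p.1)%:E].

Definition frechet_diff_at (g : (X -> R) -> \bar R) (v : X -> R) (a : X) : Prop :=
  g v \is a fin_num /\
  forall eps : R, 0 < eps -> exists2 delta : R, 0 < delta &
    forall h : X -> R, is_dual h -> dnorm h < delta ->
      (`| g (v \+ h)%R - g v - (h a)%:E | <= (eps * dnorm h)%:E)%E.

End Defs.

(* Main.v *)
Require Import Defs.
From HB Require Import structures.
From mathcomp Require Import all_boot all_order all_algebra.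
From mathcomp Require Import all_classical all_reals.
From mathcomp Require Import ereal topology normedtype.
From mathcomp Require Import sequences.
From mathcomp Require Import ring lra.
Import Order.TTheory GRing.Theory Num.Theory.
Import numFieldNormedType.Exports.
Local Open Scope classical_set_scope.
Local Open Scope ring_scope.

Set Implicit Arguments. Unset Strict Implicit. Unset Printing Implicit Defensive.

Section HBsec.
Context {R : realType} {X : lmodType R}.
Variables (p : X -> R) (padd : forall x y, p (x + y) <= p x + p y)
  (phom : forall t x, 0 <= t -> p (t *: x) = t * p x) (z0 : X).

Let p0 : p 0 = 0.
Proof. by rewrite -(scale0r (0 : X)) phom // mul0r. Qed.

Definition validG (A : set (X * R)) :=
  [/\ (forall x r s, A (x, r) -> A (x, s) -> r = s),
      (forall a x r y s, A (x, r) -> A (y, s) -> A (a *: x + y, a * r + s)) &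
      (forall x r, A (x, r) -> r <= p x)].

Definition PG (A : set (X * R)) := validG A /\ ((exists u, A u) -> A (z0, p z0)).

Let G0 : set (X * R) := [set (t *: z0, t * p z0) | t in [set: R]].

Let PG0 : PG G0.
Proof.
split; last by move=> _; exists 1 => //; rewrite scale1r mul1r.
split.
- move=> x r s [t _ [<- <-]] [u _ [e <-]].
  have /eqP : (t - u) *: z0 = 0 by rewrite scalerBl e subrr.
  rewrite scaler_eq0 => /orP[]; first by rewrite subr_eq0 => /eqP ->.
  move=> /eqP z00; move: e; rewrite z00 p0 !mulr0 //.
- move=> a x r y s [t _ [<- <-]] [u _ [<- <-]].
  by exists (a * t + u) => //; rewrite scalerDl scalerA mulrDl mulrA.
- move=> x r [t _ [<- <-]].
  have [t0|t0] := leP 0 t; first by rewrite phom.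
  have : 0 <= p z0 + p (- z0) by rewrite -p0 -[X in p X](subrr z0) padd.
  have -> : t *: z0 = (- t) *: (- z0) by rewrite scaleNr scalerN opprK.
  rewrite phom; last by rewrite oppr_ge0 ltW.
  move=> h; nra.
Qed.

Let chainP : forall F : set (set (X * R)), F `<=` PG -> total_on F subset ->
  PG (\bigcup_(A in F) A).
Proof.
move=> F FP tot; split.
- split.
  + move=> x r s [A FA Ar] [B FB Bs].
    have [AB|BA] := tot _ _ FA FB.
    * by have [[f _ _] _] := FP _ FB; apply: f (AB _ Ar) Bs.
    * by have [[f _ _] _] := FP _ FA; apply: f Ar (BA _ Bs).
  + move=> a x r y s [A FA Ar] [B FB Bs].
    have [AB|BA] := tot _ _ FA FB.
    * by have [[_ f _] _] := FP _ FB; exists B => //; apply: f (AB _ Ar) Bs.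
    * by have [[_ f _] _] := FP _ FA; exists A => //; apply: f Ar (BA _ Bs).
  + by move=> x r [A FA Ar]; have [[_ _ f] _] := FP _ FA; apply: f Ar.
- move=> [u [A FA Au]]; exists A => //.
  by have [_ f] := FP _ FA; apply: f; exists u.
Qed.

Let extend (A : set (X * R)) (x1 : X) : PG A -> A (z0, p z0) ->
  ~ (exists r, A (x1, r)) -> exists B, A `<` B /\ PG B.
Proof.
move=> [[fA cA dA] _] Az0 nx1.
have A00 : A (0, 0).
  by have := cA (-1) _ _ _ _ Az0 Az0; rewrite scaleN1r addNr mulN1r addNr.
set Lo' := [set e | exists x r, A (x, r) /\ e = r - p (x - x1)].
have key : forall x r y s, A (x, r) -> A (y, s) -> r - p (x - x1) <= p (y + x1) - s.
  move=> x r y s Ar As.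
  have := cA 1 _ _ _ _ Ar As; rewrite scale1r mul1r => /dA h.
  have := padd (x - x1) (y + x1).
  have -> : x - x1 + (y + x1) = x + y by rewrite addrCA subrK addrC.
  lra.
have Lone : Lo' !=set0 by exists (0 - p (0 - x1)); exists 0, 0.
have Lub : ubound Lo' (p (0 + x1) - 0).
  by move=> e [x [r [Ar ->]]]; apply: key Ar A00.
pose c := sup Lo'.
have cge : forall x r, A (x, r) -> r - p (x - x1) <= c.
  move=> x r Ar; apply: ub_le_sup; first by exists (p (0 + x1) - 0).
  by exists x, r.
have cle : forall y s, A (y, s) -> c <= p (y + x1) - s.
  by move=> y s As; apply: ge_sup => // e [x [r [Ar ->]]]; apply: key.
pose B : set (X * R) := [set u | exists x r t, A (x, r) /\ u = (x + t *: x1, r + t * c)].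
have AB : A `<=` B.
  by move=> [x r] Ar; exists x, r, 0; rewrite scale0r addr0 mul0r addr0.
have Bx1 : B (x1, c).
  by exists 0, 0, 1; rewrite scale1r add0r mul1r add0r.
exists B; split.
  split => //; move=> BA; apply: nx1; exists c; exact: BA.
split; last by move=> _; apply: AB.
split.
- move=> x r s [y [r' [t [Ay [-> ->]]]]] [y' [s' [t' [Ay' [e ->]]]]].
  have [tt|tt] := eqVneq t t'.
    move: e; rewrite tt => /addIr ey; rewrite ey in Ay.
    by rewrite (fA _ _ _ Ay Ay').
  exfalso; apply: nx1.
  have := cA (-1) _ _ _ _ Ay' Ay; set w := _ *: y' + y; set v := _ * s' + r' => Aw.
  have := cA ((t' - t)^-1) _ _ _ _ Aw A00; rewrite addr0 addr0.
  have -> : (t' - t)^-1 *: w = x1.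
    rewrite /w scaleN1r.
    have -> : - y' + y = (t' - t) *: x1.
      apply: (addIr (t *: x1)); by rewrite -scalerDl subrK -addrA e addKr.
    by rewrite scalerA mulVf ?scale1r // subr_eq0 eq_sym.
  by move=> h; exists ((t' - t)^-1 * v).
- move=> a x r y s [x' [r' [t [Ax' [-> ->]]]]] [y' [s' [t' [Ay' [-> ->]]]]].
  exists (a *: x' + y'), (a * r' + s'), (a * t + t'); split; first exact: cA.
  congr pair.
    by rewrite scalerDr scalerA addrACA scalerDl.
  ring.
- move=> x r [y [s [t [Ay [-> ->]]]]] /=.
  have [t0|t0|->] := ltgtP t 0; last by rewrite scale0r mul0r !addr0; apply: dA.
  + set u := - t.
    have u0 : 0 < u by rewrite /u oppr_gt0.
    have := cge _ _ (cA (u^-1) _ _ _ _ Ay A00); rewrite !addr0.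
    have -> : u^-1 *: y - x1 = u^-1 *: (y + t *: x1).
      by rewrite scalerDr scalerA /u invrN mulNr mulVf ?lt_eqF // scaleN1r.
    rewrite phom; last by rewrite invr_ge0 ltW.
    move=> h.
    have : u * (u^-1 * s - u^-1 * p (y + t *: x1)) <= u * c by rewrite ler_pM2l.
    rewrite mulrBr !mulrA mulfV ?lt0r_neq0 // !mul1r /u.
    lra.
  + have := cle _ _ (cA (t^-1) _ _ _ _ Ay A00); rewrite !addr0.
    have -> : t^-1 *: y + x1 = t^-1 *: (y + t *: x1).
      by rewrite scalerDr scalerA mulVf ?gt_eqF // scale1r.
    rewrite phom; last by rewrite invr_ge0 ltW.
    move=> h.
    have : t * c <= t * (t^-1 * p (y + t *: x1) - t^-1 * s) by rewrite ler_pM2l.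
    rewrite mulrBr !mulrA mulfV ?gt_eqF // !mul1r.
    lra.
Qed.

Lemma hahn_banach : exists L : X -> R,
  [/\ forall a x y, L (a *: x + y) = a * L x + L y,
      forall x, L x <= p x & L z0 = p z0].
Proof.
have [A [PA Amax]] := Zorn_bigcup chainP.
have Az0 : A (z0, p z0).
  case: PA => _; apply; apply: contrapT => nA.
  apply: (Amax G0) PG0; split.
    by move=> u Au; exfalso; apply: nA; exists u.
  move=> G0A; apply: nA; exists (z0, p z0); apply: G0A.
  by exists 1 => //; rewrite scale1r mul1r.
have tot : forall x, exists r, A (x, r).
  move=> x; apply: contrapT => nx.
  have [B [AB PB]] := extend PA Az0 nx.
  exact: Amax AB PB.
pose L x := projT1 (cid (tot x)).
have LA x : A (x, L x) by rewrite /L; case: cid.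
case: PA => [[fA cA dA] _].
exists L; split.
- by move=> a x y; apply: fA (LA _) (cA _ _ _ _ _ (LA x) (LA y)).
- by move=> x; apply: dA (LA x).
- exact: fA (LA _) Az0.
Qed.

End HBsec.

Section Basic.
Context {R : realType} {X : normedModType R}.

Definition linf (L : X -> R) := forall a x y, L (a *: x + y) = a * L x + L y.

Lemma linf0 L : linf L -> L 0 = 0.
Proof. by move=> hL; have := hL 1 0 0; rewrite scale1r addr0 mul1r; lra. Qed.

Lemma linfD L : linf L -> forall x y, L (x + y) = L x + L y.
Proof. by move=> hL x y; rewrite -[x in LHS]scale1r hL mul1r. Qed.

Lemma linfZ L : linf L -> forall a x, L (a *: x) = a * L x.
Proof. by move=> hL a x; rewrite -[_ *: _]addr0 hL linf0 // addr0. Qed.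

Lemma linfN L : linf L -> forall x, L (- x) = - L x.
Proof. by move=> hL x; rewrite -scaleN1r linfZ // mulN1r. Qed.

Lemma linfB L : linf L -> forall x y, L (x - y) = L x - L y.
Proof. by move=> hL x y; rewrite linfD // linfN. Qed.

Lemma bounded_dual (L : X -> R) (C : R) : linf L -> (forall y, `|L y| <= C * `|y|) -> is_dual L.
Proof.
move=> hL hC; split => //.
move=> x; apply/cvgrPdist_lt => e e0.
have C1 : 0 < `|C| + 1 by rewrite ltr_pwDr // normr_ge0.
near=> t.
rewrite -linfB //; apply: (le_lt_trans (hC _)).
apply: (le_lt_trans (ler_wpM2r (normr_ge0 _) (ler_norm C))).
have : `|x - t| < e / (`|C| + 1).
  near: t; apply/nbhs_ballP; exists (e / (`|C| + 1)); first by rewrite /= divr_gt0.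
  by move=> t; rewrite -ball_normE /ball_ /=.
rewrite ltr_pdivlMr // => h.
apply: le_lt_trans h; rewrite mulrC ler_wpM2l ?normr_ge0 //; lra.
Unshelve. all: by end_near.
Qed.

Lemma dual_bound (L : X -> R) : is_dual L -> exists2 C : R, 0 < C & forall y, `|L y| <= C * `|y|.
Proof.
move=> [hL cL].
have := cL 0; move/cvgrPdist_lt => /(_ 1 ltr01).
rewrite linf0 // => /nbhs_ballP[d d0 hd].
have {}d0 : 0 < d := d0.
exists (2 / d); first by rewrite divr_gt0.
move=> y; have [->|y0] := eqVneq y 0; first by rewrite linf0 // !normr0 mulr0.
have ny0 : 0 < `|y| by rewrite normr_gt0.
pose z := (d / (2 * `|y|)) *: y.
have c0 : 0 <= d / (2 * `|y|) by rewrite divr_ge0 ?ltW // mulr_gt0.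
have hz : `|L z| < 1.
  have := hd z; rewrite -ball_normE /ball_ /= !sub0r !normrN.
  apply; rewrite /z normrZ ger0_norm //.
  have -> : d / (2 * `|y|) * `|y| = d / 2 by field; rewrite gt_eqF.
  lra.
move: hz; rewrite /z linfZ // normrM ger0_norm //.
rewrite mulrAC ltr_pdivrMr ?mulr_gt0 // mul1r => h.
rewrite mulrAC ler_pdivlMr // mulrC; lra.
Qed.


Lemma dnorm_le (h : X -> R) (c : R) : 0 <= c -> (forall y, `|h y| <= c * `|y|) ->
  dnorm h <= c.
Proof.
move=> c0 hc; apply: ge_sup; first by exists `|h 0|, 0 => //=; rewrite normr0.
move=> _ [y /= y1 <-]; apply: le_trans (hc y) _.
by rewrite -[leRHS]mulr1 ler_wpM2l.
Qed.

Lemma norming (z : X) : exists g : X -> R,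
  [/\ is_dual g, forall y, `|g y| <= `|y| & g z = `|z|].
Proof.
have hom : forall t (y : X), 0 <= t -> `|t *: y| = t * `|y|.
  by move=> t y t0; rewrite normrZ ger0_norm.
have [L [hL Lp Lz]] := @hahn_banach R X (fun y => `|y|) (@ler_normD _ _) hom z.
have Lb : forall y, `|L y| <= `|y|.
  move=> y; rewrite ler_norml Lp andbT.
  have := Lp (- y); rewrite (linfN hL) normrN; lra.
exists L; split => //.
by apply: (bounded_dual (C := 1)) => // y; rewrite mul1r.
Qed.

Lemma ball_bound (L : X -> R) (rho c : R) : linf L -> 0 < rho ->
  (forall u, `|u| < rho -> L u <= c) -> forall w, `|L w| <= (2 * c / rho) * `|w|.
Proof.
move=> hL r0 hc.
have c0 : 0 <= c by have := hc 0; rewrite normr0 linf0 //; apply.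
have key : forall w, L w <= (2 * c / rho) * `|w|.
  move=> w; have [->|w0] := eqVneq w 0; first by rewrite linf0 // normr0 mulr0.
  have nw : 0 < `|w| by rewrite normr_gt0.
  pose u := (rho / (2 * `|w|)) *: w.
  have k0 : 0 < rho / (2 * `|w|) by rewrite divr_gt0 // mulr_gt0.
  have := hc u; rewrite /u (linfZ hL) normrZ (ger0_norm (ltW k0)).
  have -> : rho / (2 * `|w|) * `|w| = rho / 2 by field; rewrite gt_eqF.
  move=> /(_ ltac:(lra)) h.
  have -> : 2 * c / rho * `|w| = (rho / (2 * `|w|))^-1 * c.
    by field; rewrite !gt_eqF.
  by rewrite ler_pdivlMl.
move=> w; rewrite ler_norml key andbT.
by have := key (- w); rewrite linfN // normrN; lra.
Qed.

End Basic.

Section Main.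
Context {R : realType} {X : completeNormedModType R}.
Variables (f : X -> \bar R) (x : X) (vs : X -> R) (ahat : X).
Hypotheses (fp : proper_fun f) (fc : convex_fun f) (fl : lsc_fun f)
  (xi : interior (dom f) x) (vd : is_dual vs)
  (fd : frechet_diff_at (fconj f) vs ahat).

Let F := fine (fconj f vs).
Let FE : fconj f vs = F%:E.
Proof. by rewrite /F fineK //; case: fd. Qed.

Let FY y : ((vs y)%:E - f y <= F%:E)%E.
Proof. by rewrite -FE; apply: ereal_sup_ubound; exists y. Qed.

Let finE y : (f y != +oo)%E -> f y = (fine (f y))%:E.
Proof.
case: fp => fn _; have := fn y; case: (f y) => //.
Qed.

Lemma smulian (e : R) : 0 < e -> exists2 t, 0 < t & forall y (eps0 : R), 0 <= eps0 ->
  ((F - eps0)%:E <= (vs y)%:E - f y)%E -> `|y - ahat| <= eps0 / t + e.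
Proof.
move=> e0; case: fd => _ /(_ e e0) [delta d0 Hd].
have t0 : 0 < delta / 2 by rewrite divr_gt0.
exists (delta / 2) => // y eps0 ep0 hy.
have [fy Efy] : exists fy, f y = fy%:E.
  case: fp => fn _; move: hy (fn y); case: (f y) => [r| |] //= hy _.
  by exists r.
rewrite Efy in hy.
have [g [gd gb gz]] := norming (y - ahat).
pose h := fun w => delta / 2 * g w.
have hb : forall w, `|h w| <= delta / 2 * `|w|.
  by move=> w; rewrite /h normrM (ger0_norm (ltW t0)) ler_wpM2l ?(ltW t0).
have hd : is_dual h.
  apply: (bounded_dual (C := delta / 2)) => //.
  by move=> a u v; rewrite /h (proj1 gd) mulrDr mulrCA.
have hn : dnorm h <= delta / 2 by apply: dnorm_le => //; apply: ltW.
have hlt : dnorm h < delta by apply: le_lt_trans hn _; lra.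
have := Hd h hd hlt.
have ub : ((vs y + h y)%:E - f y <= fconj f (vs \+ h)%R)%E.
  by apply: ereal_sup_ubound; exists y.
rewrite Efy in ub; rewrite FE.
case: (fconj f (vs \+ h)%R) ub => [G| |] //= ub.
rewrite lee_fin => hG.
rewrite -EFinD lee_fin in ub; rewrite -EFinB lee_fin in hy.
have hyah : h y - h ahat = delta / 2 * `|y - ahat|.
  by rewrite /h -mulrBr -(linfB (proj1 gd)) gz.
have := ler_norm (G - F - h ahat).
have hdn : e * dnorm h <= e * (delta / 2) by apply: ler_wpM2l => //; apply: ltW.
move=> hn2.
have key : delta / 2 * `|y - ahat| <= delta / 2 * (eps0 / (delta / 2) + e).
  rewrite mulrDr mulrCA mulfV ?gt_eqF // mulr1; lra.
by move: key; rewrite ler_pM2l.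
Qed.

Lemma pos_min (a b : R) : 0 < a -> 0 < b -> exists m, [/\ 0 < m, m <= a & m <= b].
Proof.
move=> a0 b0; exists (Num.min a b); split.
- by rewrite lt_min a0 b0.
- by rewrite ge_min lexx.
- by rewrite ge_min lexx orbT.
Qed.

Lemma approx0 (eps0 : R) : 0 < eps0 -> exists y, ((F - eps0)%:E < (vs y)%:E - f y)%E.
Proof.
move=> e0; have : ((F - eps0)%:E < fconj f vs)%E.
  by rewrite FE lte_fin; lra.
by move=> /ereal_sup_gt[_ [y _ <-] h]; exists y.
Qed.

Lemma approx (eps0 r : R) : 0 < eps0 -> 0 < r ->
  exists y, ((F - eps0)%:E < (vs y)%:E - f y)%E /\ `|y - ahat| < r.
Proof.
move=> e0 r0.
have r2 : 0 < r / 2 by lra.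
have [t t0 ht] := smulian r2.
have r4 : 0 < r / 4 by lra.
have [m [m0 m1 m2]] := pos_min e0 (mulr_gt0 t0 r4).
have [y hy] := approx0 m0; exists y; split.
  by apply: le_lt_trans hy; rewrite lee_fin; lra.
have := ht y m (ltW m0) (ltW hy).
have : m / t <= r / 4 by rewrite ler_pdivrMr // mulrC.
lra.
Qed.

Lemma fahat : f ahat = (vs ahat - F)%:E.
Proof.
have [Cv Cv0 hCv] := dual_bound vd.
have le_c : forall c : R, vs ahat - F < c -> (f ahat <= c%:E)%E.
  move=> c hc; have := @fl c ahat; rewrite /=; apply => B /nbhs_ballP[r r0 hB].
  have {}r0 : 0 < r := r0.
  set gap := c - (vs ahat - F).
  have g0 : 0 < gap by rewrite /gap; lra.
  have g2 : 0 < gap / (2 * Cv) by rewrite divr_gt0 // mulr_gt0.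
  have [m [m0 m1 m2]] := pos_min r0 g2.
  have g4 : 0 < gap / 4 by lra.
  have [y [hy hyr]] := approx g4 m0.
  exists y; split; last first.
    by apply: hB; rewrite -ball_normE /ball_ /= distrC; lra.
  rewrite /=.
  case: fp => fn _; move: hy (fn y); case: (f y) => [fy| |] //= hy _.
  rewrite lee_fin; rewrite -EFinB lte_fin in hy.
  have := hCv (y - ahat); rewrite (linfB (proj1 vd)).
  rewrite ler_pdivlMr ?mulr_gt0 // in m2.
  have : Cv * `|y - ahat| <= Cv * m by apply: ler_wpM2l; [apply: ltW|apply: ltW].
  move=> h1 h2; have := ler_norm (vs y - vs ahat).
  rewrite /gap in g0 g4 m2 hy *; nra.
case E: (f ahat) => [a| |].
- apply: congr1; apply/le_anti/andP; split.
    apply/ler_addgt0Pr => eps eps0.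
    by have := le_c (vs ahat - F + eps); rewrite E lee_fin; apply; lra.
  by have := FY ahat; rewrite E -EFinB lee_fin; lra.
- have : vs ahat - F < vs ahat - F + 1 by lra.
  by move/le_c; rewrite E.
- by case: fp => fn _; have := fn ahat; rewrite E.
Qed.

Lemma mid_id (y a b : X) :
  2^-1 *: (y + a) + (1 - 2^-1) *: (y + b) = y + 2^-1 *: (a + b).
Proof.
have -> : (1 - 2^-1 : R) = 2^-1 by field.
rewrite -scalerDr addrACA scalerDr; congr (_ + _).
have -> : y + y = (2:R) *: y by rewrite -[in LHS](scale1r y) -scalerDl.
by rewrite scalerA mulVf ?scale1r.
Qed.

Lemma cont_aff (y : X) (k : R) : continuous (fun z : X => y + k *: z).
Proof.
move=> z; apply/cvgrPdist_lt => e e0.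
have k1 : 0 < `|k| + 1 by rewrite ltr_pwDr // normr_ge0.
near=> t.
rewrite opprD addrACA subrr add0r -scalerBr normrZ.
have : `|z - t| < e / (`|k| + 1).
  near: t; apply/nbhs_ballP; exists (e / (`|k| + 1)); first by rewrite /= divr_gt0.
  by move=> t; rewrite -ball_normE /ball_ /=.
rewrite ltr_pdivlMr // => h.
apply: le_lt_trans h; rewrite mulrC ler_wpM2l ?normr_ge0 //; lra.
Unshelve. all: by end_near.
Qed.

Lemma local_bound : exists rho M : R, 0 < rho /\
  forall u, `|u| < rho -> (f (x + u)%R <= M%:E)%E.
Proof.
move: xi => /nbhs_ballP[r r0 hr]; have {}r0 : 0 < r := r0.
have fin_near : forall z, `|x - z| < r -> exists b, f z = b%:E.
  move=> z hz; have := hr z; rewrite -ball_normE /ball_ /= => /(_ hz).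
  rewrite /dom /=; case: fp => fn _; move: (fn z); case: (f z) => // b _ _.
  by exists b.
pose A (m j : nat) := [set y : X |
  (f (x + (m.+1%:R)^-1 *: y)%R <= (j%:R)%:E)%E /\
  (f (x + (m.+1%:R)^-1 *: (- y))%R <= (j%:R)%:E)%E].
pose B (n : nat) : set X :=
  if @unpickle (nat * nat)%type n is Some (m, j) then A m j else set0.
have Acl : forall m j, closed (A m j).
  move=> m j; apply: closedI.
  - apply: (@preimage_closed _ _ (fun y => x + (m.+1%:R)^-1 *: y)
      [set z | (f z <= (j%:R)%:E)%E]); last exact: fl.
    by move=> y _; apply: cont_aff.
  - apply: (@preimage_closed _ _ (fun y => x + (m.+1%:R)^-1 *: (- y))
      [set z | (f z <= (j%:R)%:E)%E]); last exact: fl.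
    move=> y _.
    have -> : (fun y => x + (m.+1%:R)^-1 *: (- y)) =
              (fun y => x + (- (m.+1%:R)^-1) *: y).
      by apply: funext => z; rewrite scalerN scaleNr.
    exact: cont_aff.
have cover : forall y, exists n, B n y.
  move=> y.
  have [m hm] : exists m : nat, `|y| / r < m.+1%:R.
    by exists (Num.truncn (`|y| / r)); apply: truncnS_gt.
  have m0 : (0 : R) < m.+1%:R by rewrite ltr0Sn.
  have hk : `|(m.+1%:R)^-1 *: y| < r.
    rewrite normrZ ger0_norm ?invr_ge0 ?ltW //.
    rewrite mulrC ltr_pdivrMr //; rewrite ltr_pdivrMr // in hm.
    by rewrite mulrC.
  have [b1 E1] := fin_near (x + (m.+1%:R)^-1 *: y)
    ltac:(by rewrite opprD addrA subrr add0r normrN).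
  have [b2 E2] := fin_near (x + (m.+1%:R)^-1 *: (- y))
    ltac:(by rewrite opprD addrA subrr add0r normrN scalerN normrN).
  pose j := (Num.truncn (`|b1| + `|b2|)).+1.
  have hj : `|b1| + `|b2| < j%:R by apply: truncnS_gt.
  exists (pickle (m, j)); rewrite /B pickleK; split.
  - rewrite E1 lee_fin; have := ler_norm b1; have := normr_ge0 b2; lra.
  - rewrite E2 lee_fin; have := ler_norm b2; have := normr_ge0 b1; lra.
have [n [y0 [rho [rho0 hball]]]] :
    exists n y0 (rho : R), 0 < rho /\ ball y0 rho `<=` B n.
  apply: contrapT => H.
  have hd : forall i, open (~` B i) /\ dense (~` B i).
    move=> i; split; first by apply: closed_openC; rewrite /B;
      case: unpickle => [[m j]|]; [exact: Acl | exact: closed0].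
    move=> O [o Oo] oO; apply: contrapT => hne; apply: H.
    have := @open_nbhs_nbhs _ o O (conj oO Oo) => /nbhs_ballP[rh rh0 hb].
    exists i, o, rh; split => // z hz; apply: contrapT => nB.
    by apply: hne; exists z; split => //; apply: hb.
  have := @Baire R X (fun n => ~` B n) hd setT (ex_intro _ 0 I) openT.
  move=> [y [_ hy]]; have [n hn] := cover y.
  exact: (hy n I hn).
move: hball; rewrite /B; case: unpickle => [[m j]|] hball; last first.
  by exfalso; apply: (hball y0); apply: ballxx.
have m0 : (0 : R) < m.+1%:R by rewrite ltr0Sn.
exists (rho / m.+1%:R), j%:R; split; first by rewrite divr_gt0.
move=> u hu; set w := m.+1%:R *: u.
have hw : `|w| < rho.
  by rewrite /w normrZ ger0_norm ?ltW // mulrC -ltr_pdivlMr.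
have [h1 _] := hball (y0 + w)
  ltac:(by rewrite -ball_normE /ball_ /= opprD addrA subrr add0r normrN).
have [_ h2] := hball (y0 - w)
  ltac:(by rewrite -ball_normE /ball_ /= opprD addrA subrr add0r opprK).
have -> : x + u = 2^-1 *: (x + (m.+1%:R)^-1 *: (y0 + w)) +
    (1 - 2^-1) *: (x + (m.+1%:R)^-1 *: (- (y0 - w))).
  rewrite mid_id -scalerDr opprB [w - y0]addrC addrACA subrr add0r.
  have -> : w + w = (2:R) *: w by rewrite -[in LHS](scale1r w) -scalerDl.
  rewrite !scalerA; congr (_ + _); rewrite -[LHS]scale1r; congr (_ *: _).
  by field; rewrite addrC natr1 pnatr_eq0.
have h12 : 0 < (2:R)^-1 < 1 by apply/andP; split; lra.
apply: (le_trans (fc _ _ h12)).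
move: h1 h2; case: fp => fn _.
move: (fn (x + (m.+1%:R)^-1 *: (y0 + w))) (fn (x + (m.+1%:R)^-1 *: (- (y0 - w)))).
case: (f (x + (m.+1%:R)^-1 *: (y0 + w))) => [a1| |] //;
case: (f (x + (m.+1%:R)^-1 *: (- (y0 - w)))) => [a2| |] //=.
rewrite !lee_fin => _ _ ha1 ha2.
lra.
Qed.

Hypothesis hF : fitzpatrick f x vs = (f x + fconj f vs)%E.

Let fx := fine (f x).
Let fxE : f x = fx%:E.
Proof.
have := nbhs_singleton xi; rewrite /dom /= /fx.
by case: fp => fn _; move: (fn x); case: (f x).
Qed.

Definition good (eps : R) (p : X * (X -> R)) :=
  graph_subdiff f p /\ fx + F - eps < vs p.1 + p.2 x - p.2 p.1.

Lemma good_ex (eps : R) : 0 < eps -> exists p, good eps p.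
Proof.
move=> e0; have : ((fx + F - eps)%:E < fitzpatrick f x vs)%E.
  by rewrite hF fxE FE -EFinD lte_fin; lra.
by move=> /ereal_sup_gt[_ [p gp <-]]; rewrite lte_fin => h; exists p.
Qed.

Lemma good_mono (e1 e2 : R) p : e1 <= e2 -> good e1 p -> good e2 p.
Proof. by move=> le [gp h]; split => //; lra. Qed.

Lemma good_props (eps : R) y ys : good eps (y, ys) ->
  exists fy, [/\ f y = fy%:E, is_dual ys,
    forall z, (fy%:E + (ys (z - y))%:E <= f z)%E,
    F - eps < vs y - fy &
    forall z, ((fx - eps + ys (z - x))%:E <= f z)%E].
Proof.
move=> [[ysd [fyf sub]] /= h]; rewrite /= in ysd fyf sub.
exists (fine (f y)); have fyE : f y = (fine (f y))%:E by rewrite fineK.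
have ha := sub x; rewrite fyE fxE -EFinD lee_fin in ha.
have hb := FY y; rewrite fyE -EFinB lee_fin in hb.
have lin := linfB (proj1 ysd).
rewrite lin in ha.
split => //.
- by rewrite -fyE.
- lra.
- move=> z; apply: le_trans (sub z); rewrite fyE -EFinD lee_fin.
  have : ys (z - y) = ys (z - x) + ys (x - y).
    by rewrite -(linfD (proj1 ysd)) addrA subrK.
  rewrite !lin; lra.
Qed.

Lemma good_dual (eps : R) p : good eps p -> is_dual p.2.
Proof. by case=> [[]]. Qed.

Lemma Kbound : exists2 K : R, 0 < K & forall (eps : R) p, eps <= 1 -> good eps p ->
  forall w, `|p.2 w| <= K * `|w|.
Proof.
have [rho [M [rho0 hM]]] := local_bound.
have fxM : fx <= M.
  by have := hM 0; rewrite normr0 addr0 fxE lee_fin; apply.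
exists (2 * (M - fx + 1) / rho); first by rewrite divr_gt0 // mulr_gt0 //; lra.
move=> eps [y ys] e1 gp w /=.
have [fy [_ ysd _ _ he]] := good_props gp.
apply: (ball_bound (proj1 ysd) rho0) => u hu.
have := le_trans (he (x + u)) (hM u hu).
have -> : x + u - x = u by rewrite addrC addKr.
rewrite lee_fin; lra.
Qed.

Section WithK.
Variable K : R.
Hypotheses (K0 : 0 < K) (hK : forall (eps : R) p, eps <= 1 -> good eps p ->
  forall w, `|p.2 w| <= K * `|w|).

Definition s (eps : R) (w : X) := sup [set r | exists p, good eps p /\ r = p.2 w].
Definition q (w : X) := inf [set r | exists eps : R, (0 < eps <= 1) /\ r = s eps w].

Lemma s_ub (eps : R) p w : eps <= 1 -> good eps p -> p.2 w <= s eps w.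
Proof.
move=> e1 gp; apply: ub_le_sup; last by exists p.
by exists (K * `|w|) => r [p' [gp' ->]]; apply: le_trans (ler_norm _) (hK e1 gp' w).
Qed.

Lemma s_lub (eps : R) w (c : R) : 0 < eps ->
  (forall p, good eps p -> p.2 w <= c) -> s eps w <= c.
Proof.
move=> e0 h; have [p gp] := good_ex e0.
by apply: ge_sup; [exists (p.2 w), p | move=> r [p' [gp' ->]]; apply: h].
Qed.

Lemma s_le (eps : R) w : 0 < eps <= 1 -> s eps w <= K * `|w|.
Proof.
move=> /andP[e0 e1]; apply: s_lub => // p gp.
exact: le_trans (ler_norm _) (hK e1 gp w).
Qed.

Lemma s_ge (eps : R) w : 0 < eps <= 1 -> - (K * `|w|) <= s eps w.
Proof.
move=> /andP[e0 e1]; have [p gp] := good_ex e0.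
apply: le_trans (s_ub w e1 gp).
by have := hK e1 gp w; rewrite ler_norml => /andP[].
Qed.

Lemma s_add (eps : R) w1 w2 : 0 < eps <= 1 ->
  s eps (w1 + w2) <= s eps w1 + s eps w2.
Proof.
move=> /andP[e0 e1]; apply: s_lub => // p gp.
rewrite (linfD (proj1 (good_dual gp))).
by apply: lerD; apply: s_ub.
Qed.

Lemma s_homle (eps : R) (t : R) w : 0 < eps <= 1 -> 0 <= t ->
  s eps (t *: w) <= t * s eps w.
Proof.
move=> /andP[e0 e1] t0; apply: s_lub => // p gp.
rewrite (linfZ (proj1 (good_dual gp))).
by apply: ler_wpM2l => //; apply: s_ub.
Qed.

Lemma Qset_inf w : has_inf [set r | exists eps : R, (0 < eps <= 1) /\ r = s eps w].
Proof.
split; first by exists (s 1 w), 1; rewrite ltr01 lexx.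
by exists (- (K * `|w|)) => r [eps [he ->]]; apply: s_ge.
Qed.

Lemma q_le (eps : R) w : 0 < eps <= 1 -> q w <= s eps w.
Proof. by move=> he; apply: ge_inf; [case: (Qset_inf w) | exists eps]. Qed.

Lemma q_ge w : - (K * `|w|) <= q w.
Proof.
apply: lb_le_inf; first by case: (Qset_inf w).
by move=> r [eps [he ->]]; apply: s_ge.
Qed.

Lemma q_adh w (eta : R) : 0 < eta -> exists eps : R, 0 < eps <= 1 /\ s eps w < q w + eta.
Proof.
move=> et0; have [_ [eps [he ->]] h] := inf_adherent et0 (Qset_inf w).
by exists eps.
Qed.

Lemma s_mono (e1 e2 : R) w : 0 < e1 -> e1 <= e2 -> e2 <= 1 -> s e1 w <= s e2 w.
Proof.
move=> e10 le e21; apply: s_lub => // p gp.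
by apply: s_ub => //; apply: good_mono gp.
Qed.

Lemma q_add w1 w2 : q (w1 + w2) <= q w1 + q w2.
Proof.
apply/ler_addgt0Pr => eta et0.
have et2 : 0 < eta / 2 by lra.
have [e1 [/andP[e10 e11] h1]] := q_adh w1 et2.
have [e2 [/andP[e20 e21] h2]] := q_adh w2 et2.
have [m [m0 m1 m2]] := pos_min e10 e20.
have hm : 0 < m <= 1 by rewrite m0 /=; apply: le_trans m1 e11.
apply: le_trans (q_le _ hm) _; apply: le_trans (s_add _ _ hm) _.
have := s_mono w1 m0 m1 e11; have := s_mono w2 m0 m2 e21; lra.
Qed.

Lemma q0 : q 0 = 0.
Proof.
apply/le_anti/andP; split; last by have := q_ge 0; rewrite normr0 mulr0 oppr0.
have h1 : 0 < (1:R) <= 1 by rewrite ltr01 lexx.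
apply: le_trans (q_le 0 h1) _.
by have := s_le 0 h1; rewrite normr0 mulr0.
Qed.

Lemma q_homle (t : R) w : 0 < t -> q (t *: w) <= t * q w.
Proof.
move=> t0; apply/ler_addgt0Pr => eta et0.
have et : 0 < eta / t by rewrite divr_gt0.
have [eps [he h]] := q_adh w et.
apply: le_trans (q_le _ he) _; apply: le_trans (s_homle _ he (ltW t0)) _.
have : t * s eps w <= t * (q w + eta / t) by apply: ler_wpM2l; [apply: ltW|apply: ltW].
by rewrite mulrDr mulrCA mulfV ?gt_eqF // mulr1.
Qed.

Lemma q_hom (t : R) w : 0 <= t -> q (t *: w) = t * q w.
Proof.
rewrite le_eqVlt => /orP[/eqP <-|t0]; first by rewrite scale0r q0 mul0r.
apply/le_anti/andP; split; first exact: q_homle.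
have ti : 0 < t^-1 by rewrite invr_gt0.
have := q_homle (t *: w) ti.
rewrite scalerA mulVf ?gt_eqF // scale1r => h.
by rewrite -ler_pdivlMl // mulrC.
Qed.

Lemma exists_L : exists L, is_dual L /\ forall w, L w <= q w.
Proof.
have [L [hL Lq _]] := @hahn_banach R X q q_add q_hom 0.
exists L; split => //; apply: (bounded_dual (C := K)) => // w.
have h1 : 0 < (1:R) <= 1 by rewrite ltr01 lexx.
have a1 : forall w, L w <= K * `|w|.
  by move=> v; apply: le_trans (Lq v) _; apply: le_trans (q_le _ h1) (s_le _ h1).
rewrite ler_norml a1 andbT.
by have := a1 (- w); rewrite (linfN hL) normrN; lra.
Qed.

Lemma P1 L : (forall w, L w <= q w) -> forall z fz, f z = fz%:E -> L (z - x) <= fz - fx.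
Proof.
move=> Lq z fz fzE; apply: le_trans (Lq _) _; apply/ler_addgt0Pr => eta et0.
have [m [m0 m1 m2]] := pos_min ltr01 et0.
have hm : 0 < m <= 1 by rewrite m0.
apply: le_trans (q_le _ hm) _; apply: s_lub => // [[y ys]] gp /=.
have [fy [_ _ _ _ he]] := good_props gp.
have := he z; rewrite fzE lee_fin; lra.
Qed.

Lemma P2 L : (forall w, L w <= q w) -> forall z fz, f z = fz%:E ->
  L (z - ahat) <= fz - (vs ahat - F).
Proof.
move=> Lq z fz fzE; apply: le_trans (Lq _) _; apply/ler_addgt0Pr => eta et0.
have [Cv Cv0 hCv] := dual_bound vd.
have KC : 0 < K + Cv by apply: addr_gt0.
have e0 : 0 < eta / (2 * (K + Cv)) by rewrite divr_gt0 // mulr_gt0.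
set e := eta / (2 * (K + Cv)) in e0 *.
have [t t0 ht] := smulian e0.
have [m [m0 m1 m2]] := pos_min ltr01 (mulr_gt0 t0 e0).
have hm : 0 < m <= 1 by rewrite m0.
apply: le_trans (q_le _ hm) _; apply: s_lub => // [[y ys]] gp /=.
have [fy [fyE ysd sub hb _]] := good_props gp.
have hd : `|y - ahat| <= 2 * e.
  have := ht y m (ltW m0); rewrite fyE -EFinB lee_fin => /(_ (ltW hb)).
  have : m / t <= e by rewrite ler_pdivrMr // mulrC.
  lra.
have hsub := sub z; rewrite fzE -EFinD lee_fin in hsub.
have hFY := FY y; rewrite fyE -EFinB lee_fin in hFY.
have hys := hK (proj2 (andP hm)) gp (y - ahat); rewrite /= in hys.
have hv := hCv (y - ahat); rewrite (linfB (proj1 vd)) in hv.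
have split_ : ys (z - ahat) = ys (z - y) + ys (y - ahat).
  by rewrite -(linfD (proj1 ysd)) addrA subrK.
have prod : K * `|y - ahat| + Cv * `|y - ahat| <= eta.
  rewrite -mulrDl.
  have -> : eta = (K + Cv) * (2 * e) by rewrite /e; field; rewrite gt_eqF.
  by apply: ler_wpM2l => //; apply: ltW.
have := ler_norm (ys (y - ahat)).
move: hv; rewrite ler_norml => /andP[hv1 hv2].
rewrite split_; lra.
Qed.

End WithK.

Lemma main_result : Mset f x vs !=set0 /\
  (forall (a : X) (as_ : X -> R), Mset f x vs (a, as_) ->
     a = ahat /\ subdiff f x as_ /\ subdiff f ahat as_).
Proof.
split.
- have [K K0 hK] := Kbound.
  have [L [Ld Lq]] := exists_L hK.
  have fah := fahat.
  have subah : subdiff f ahat L.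
    split => //; split; first by rewrite fah.
    move=> z; case E: (f z) => [fz| |].
    + by rewrite fah -EFinD lee_fin; have := P2 K0 hK Lq E; lra.
    + by rewrite leey.
    + by case: fp => fn _; have := fn z; rewrite E.
  exists (ahat, L); split => //=.
  rewrite hF fxE FE -EFinD; apply: congr1.
  have h1 := P2 K0 hK Lq fxE.
  have h2 := P1 hK Lq fah.
  rewrite !(linfB (proj1 Ld)) in h1 h2; lra.
- move=> a as_ [[asd [faf sub]] eq] /=; rewrite /= in asd faf sub eq.
  have faE : f a = (fine (f a))%:E by rewrite fineK.
  rewrite hF fxE FE -EFinD in eq; case: eq => eq.
  have hx := sub x; rewrite faE fxE -EFinD lee_fin in hx.
  have hFY := FY a; rewrite faE -EFinB lee_fin in hFY.
  have lin := linfB (proj1 asd).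
  rewrite lin in hx.
  have aeq : a = ahat.
    apply/eqP; rewrite -subr_eq0 -normr_le0; apply/ler_addgt0Pr => e e0.
    rewrite add0r; have [t t0 ht] := smulian e0.
    have := ht a 0 (lexx 0); rewrite subr0 faE -EFinB lee_fin mul0r add0r.
    by apply; lra.
  split => //; split; last by rewrite -aeq.
  split => //; split; first by rewrite fxE.
  move=> z; apply: le_trans (sub z) ; rewrite fxE faE -!EFinD lee_fin.
  rewrite !lin; lra.
Qed.

End Main.


Theorem lemma4p2 (R : realType) (X : completeNormedModType R)
  (f : X -> \bar R) (x : X) (vs : X -> R) (ahat : X) :
  proper_fun f -> convex_fun f -> lsc_fun f ->
  interior (dom f) x ->
  is_dual vs ->
  frechet_diff_at (fconj f) vs ahat ->
  fitzpatrick f x vs = (f x + fconj f vs)%E ->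
  Mset f x vs !=set0 /\
  (forall (a : X) (as_ : X -> R), Mset f x vs (a, as_) ->
     a = ahat /\ subdiff f x as_ /\ subdiff f ahat as_).
Proof.
move=> fp fc fl xi vd fd hF.
exact: (main_result fp fc fl xi vd fd hF).
Qed.
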